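(* Let $G$ be a connected weighted undirected graph on $N$ vertices with positive edge weights and combinatorial Laplacian $L$. Let $P \in \mathbb{R}^{n\times N}$ be a coarsening matrix with respect to $G$, and let $P^+$ be its Moore–Penrose pseudoinverse. Then $L_c = (P^+)^\top L P^+$ is the combinatorial Laplacian of some weighted graph (with nonnegative weights) if and only if all nonzero entries of $P^+$ are equal.
   Context: The combinatorial Laplacian of a weighted graph with weights $w_{ij}\ge 0$ is $L(i,i) = \deg_i = \sum_j w_{ij}$, $L(i,j) = -w_{ij}$ for $i\ne j$. A matrix $P\in\mathbb{R}^{n\times N}$ is a coarsening matrix w.r.t. $G$ if: (a) every column of $P$ has exactly one nonzero entry and every row is nonzero (i.e., each vertex of $G$ is assigned to exactly one row); (b) for every row $r$, the subgraph of $G$ induced by the vertices $\{v_i : P(r,i)\ne 0\}$ is connected. *)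

(* Defs.v *)
From HB Require Import structures.
From mathcomp Require Import all_boot all_order all_algebra.
Set Implicit Arguments. Unset Strict Implicit. Unset Printing Implicit Defensive.
Import Order.TTheory GRing.Theory Num.Theory.
Local Open Scope ring_scope.

(* A weighted undirected graph on vertex set 'I_N is given by a weight
   function w with nonnegative, symmetric weights and no self-loops;
   i ~ j is an edge iff w i j > 0. *)
Definition weighted_graph (R : realFieldType) (N : nat) (w : 'I_N -> 'I_N -> R) : Prop :=
  (forall i j, 0 <= w i j) /\ (forall i j, w i j = w j i) /\ (forall i, w i i = 0).

Definition laplacian (R : realFieldType) (N : nat) (w : 'I_N -> 'I_N -> R) : 'M[R]_N :=
  \matrix_(i, j) (if i == j then \sum_(k < N) w i k else - w i j).

Definition edge (R : realFieldType) (N : nat) (w : 'I_N -> 'I_N -> R) : rel 'I_N :=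
  fun i j => 0 < w i j.

Definition connected_graph (R : realFieldType) (N : nat) (w : 'I_N -> 'I_N -> R) : Prop :=
  forall i j, connect (edge w) i j.

Definition induced_connected (R : realFieldType) (N : nat) (w : 'I_N -> 'I_N -> R)
    (S : {set 'I_N}) : Prop :=
  forall i j, i \in S -> j \in S ->
    connect (fun a b => [&& a \in S, b \in S & edge w a b]) i j.

Definition is_graph_laplacian (R : realFieldType) (n : nat) (M : 'M[R]_n) : Prop :=
  exists w : 'I_n -> 'I_n -> R, weighted_graph w /\ M = laplacian w.

Definition coarsening (R : realFieldType) (n N : nat) (w : 'I_N -> 'I_N -> R)
    (P : 'M[R]_(n, N)) : Prop :=
  (forall j : 'I_N, #|[set r : 'I_n | P r j != 0]| = 1%N) /\
  (forall r : 'I_n, exists j, P r j != 0) /\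
  (forall r : 'I_n, induced_connected w [set i : 'I_N | P r i != 0]).

Definition MP_pinv (R : realFieldType) (n N : nat) (P : 'M[R]_(n, N)) (X : 'M[R]_(N, n)) : Prop :=
  [/\ P *m X *m P = P, X *m P *m X = X, (P *m X)^T = P *m X & (X *m P)^T = X *m P].

(* Main.v *)
Require Import Defs.
From HB Require Import structures.
From mathcomp Require Import all_boot all_order all_algebra.
From mathcomp Require Import ring.
Import Order.TTheory GRing.Theory Num.Theory.
Local Open Scope ring_scope.

Lemma pinv_supp (R : realFieldType) n N (P : 'M[R]_(n,N)) (Pp : 'M[R]_(N,n)) :
  (forall k s t, P s k != 0 -> t != s -> P t k = 0) ->
  (forall r, exists j, P r j != 0) ->
  MP_pinv P Pp -> forall k s, (Pp k s != 0) = (P s k != 0).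
Proof.
move=> F1 F2 [h1 h2 h3 h4].
set M := Pp^T *m Pp.
have ePp : Pp = P^T *m M by rewrite /M mulmxA -trmx_mul h4 h2.
pose d s := \sum_j P s j ^+ 2.
have hD : forall s t, (P *m P^T) s t = if s == t then d s else 0.
  move=> s t; rewrite mxE; case: eqP => [->|/eqP nst].
    by apply: eq_bigr => j _; rewrite mxE expr2.
  apply: big1 => j _; rewrite mxE.
  have [->|nz] := eqVneq (P s j) 0; first by rewrite mul0r.
  by rewrite (F1 j s t nz) ?mulr0 // eq_sym.
have dpos : forall s, 0 < d s.
  move=> s; have [j nz] := F2 s.
  rewrite /d (bigD1 j) //=; apply: ltr_wpDr.
    by apply: sumr_ge0 => i _; rewrite sqr_ge0.
  by rewrite lt_def sqrf_eq0 nz sqr_ge0.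
have eP : P = (P *m P^T) *m (M *m P) by rewrite -{1}h1 ePp !mulmxA.
have eP2 : forall s k, P s k = d s * (M *m P) s k.
  move=> s k; rewrite {1}eP mxE (bigD1 s) //= hD eqxx big1 ?addr0 //.
  by move=> t nts; rewrite hD eq_sym (negbTE nts) mul0r.
have eMP : forall s k r, P r k != 0 -> (M *m P) s k = M s r * P r k.
  move=> s k r nz; rewrite mxE (bigD1 r) //= big1 ?addr0 //.
  by move=> t ntr; rewrite (F1 k r t nz ntr) mulr0.
have Md : forall s r, s != r -> M s r = 0.
  move=> s r nsr; have [k nz] := F2 r.
  have := eP2 s k; rewrite (F1 k r s nz nsr) (eMP s k r nz) => /esym/eqP.
  by rewrite !mulf_eq0 (negbTE nz) orbF gt_eqF ?dpos //= => /eqP.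
have Mnz : forall s, M s s != 0.
  move=> s; have [k nz] := F2 s.
  apply/eqP => M0; move: (eP2 s k); rewrite (eMP s k s nz) M0 mul0r mulr0.
  by move/eqP; rewrite (negbTE nz).
move=> k s; rewrite ePp mxE (bigD1 s) //= big1 ?addr0.
  by rewrite mxE mulf_eq0 (negbTE (Mnz s)) orbF.
by move=> t nts; rewrite Md ?mulr0.
Qed.
Lemma lap_rowsum (R : realFieldType) N (w : 'I_N -> 'I_N -> R) :
  (forall i, w i i = 0) -> forall i, \sum_k laplacian w i k = 0.
Proof.
move=> w0 i; rewrite (bigD1 i) //= /laplacian mxE eqxx.
rewrite [X in _ + X](eq_bigr (fun k => - w i k)); last by move=> k nki; rewrite /= mxE eq_sym (negbTE nki).
by rewrite sumrN (bigD1 i) //= w0 add0r subrr.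
Qed.

Lemma lap_mulv (R : realFieldType) N (w : 'I_N -> 'I_N -> R) :
  (forall i, w i i = 0) -> forall (v : 'cV[R]_N) i,
  (laplacian w *m v) i 0 = \sum_k w i k * (v i 0 - v k 0).
Proof.
move=> w0 v i; rewrite mxE [RHS](eq_bigr (fun k => w i k * v i 0 - w i k * v k 0)); last first.
  by move=> k _; rewrite mulrBr.
rewrite sumrB -mulr_suml (bigD1 i) //= /laplacian mxE eqxx.
rewrite [X in _ + X](eq_bigr (fun k => - (w i k * v k 0))); last first.
  by move=> k nki; rewrite /= mxE eq_sym (negbTE nki) mulNr.
by rewrite sumrN [X in _ = _ - X](bigD1 i) //= w0 !mul0r add0r.
Qed.

Lemma lap_quad (R : realFieldType) N (w : 'I_N -> 'I_N -> R) :
  weighted_graph w -> forall v : 'cV[R]_N,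
  (v^T *m laplacian w *m v) 0 0 = 0 -> forall i k, 0 < w i k -> v i 0 = v k 0.
Proof.
move=> [wge [wsym w0]] v.
rewrite -mulmxA mxE.
under eq_bigr => i _ do rewrite /laplacian mxE lap_mulv // mulr_sumr.
move=> Q0.
set Q := \sum_i _ in Q0.
have eQ : Q = \sum_i \sum_k v k 0 * (w i k * (v k 0 - v i 0)).
  rewrite /Q exchange_big /=; apply: eq_bigr => i _; apply: eq_bigr => k _.
  by rewrite wsym.
have eS : \sum_i \sum_k w i k * (v i 0 - v k 0) ^+ 2 = Q + Q.
  rewrite {2}eQ /Q -big_split /=; apply: eq_bigr => i _.
  rewrite -big_split /=; apply: eq_bigr => k _; ring.
move: eS; rewrite Q0 addr0 => S0.
have hnn : forall i k, 0 <= w i k * (v i 0 - v k 0)^+2.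
  by move=> i k; rewrite mulr_ge0 ?sqr_ge0.
have H1 := psumr_eq0P (fun i _ => sumr_ge0 _ (fun k _ => hnn i k)) S0.
move=> i k wik.
have := @psumr_eq0P _ _ _ _ (fun k _ => hnn i k) (H1 i isT) k isT.
by move/eqP; rewrite mulf_eq0 gt_eqF //= sqrf_eq0 subr_eq0 => /eqP.
Qed.

Theorem proposition2 (R : realFieldType) (N n : nat) (w : 'I_N -> 'I_N -> R)
    (P : 'M[R]_(n, N)) (Pp : 'M[R]_(N, n)) :
  weighted_graph w -> connected_graph w ->
  coarsening w P -> MP_pinv P Pp ->
  (is_graph_laplacian (Pp^T *m laplacian w *m Pp) <->
   (forall (i k : 'I_N) (j l : 'I_n), Pp i j != 0 -> Pp k l != 0 -> Pp i j = Pp k l)).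
Proof.
move=> Gw Gc [Pc1 [Prow _]] MP.
have [wge [wsym w0]] := Gw.
have F1 : forall k s t, P s k != 0 -> t != s -> P t k = 0.
  move=> k s t nz nts; apply/eqP; apply: contraNT nts => nzt.
  have /eqP/cards1P [r er] := Pc1 k.
  have : s \in [set r] by rewrite -er inE.
  have : t \in [set r] by rewrite -er inE.
  by rewrite !in_set1 => /eqP -> /eqP ->.
have F2 : forall k, exists r, P r k != 0.
  move=> k; have /eqP/cards1P [r er] := Pc1 k; exists r.
  have : r \in [set r] by rewrite set11.
  by rewrite -er inE.
have supp := @pinv_supp R n N P Pp F1 Prow MP.
have qE : forall k j, Pp k j != 0 -> \sum_s Pp k s = Pp k j.
  move=> k j nz; rewrite (bigD1 j) //= big1 ?addr0 // => s nsj.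
  apply/eqP; rewrite -[_ == 0]negbK supp; apply/negP => nzs.
  have := F1 k s j nzs; rewrite eq_sym => /(_ nsj) /eqP.
  by rewrite supp in nz; rewrite (negbTE nz).
set L := laplacian w.
have Lsym : L^T = L.
  apply/matrixP => i k; rewrite mxE /L /laplacian !mxE eq_sym.
  by case: eqP => [->|] //; rewrite wsym.
set Lc := Pp^T *m L *m Pp.
have Lcsym : forall r s, Lc s r = Lc r s.
  have e : Lc^T = Lc by rewrite /Lc !trmx_mul trmxK Lsym mulmxA.
  by move=> r s; rewrite -{1}e mxE.
pose ones := const_mx 1 : 'cV[R]_n.
have rowsumLc : forall r, \sum_s Lc r s = (Pp^T *m (L *m (Pp *m ones))) r 0.
  move=> r; rewrite !mulmxA -/Lc mxE; apply: eq_bigr => s _.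
  by rewrite [ones s 0]mxE mulr1.
have qv : forall k, (Pp *m ones) k 0 = \sum_s Pp k s.
  by move=> k; rewrite mxE; apply: eq_bigr => s _; rewrite [ones s 0]mxE mulr1.
split.
- case=> w' [[w'ge [w'sym w'0]] eLc].
  have rs0 : forall r, \sum_s Lc r s = 0 by move=> r; rewrite eLc lap_rowsum.
  have Q0 : ((Pp *m ones)^T *m L *m (Pp *m ones)) 0 0 = 0.
    rewrite trmx_mul -!mulmxA mxE big1 // => r _.
    by rewrite -rowsumLc rs0 mulr0.
  have qc := @lap_quad R N w Gw _ Q0.
  have qall : forall i k, (Pp *m ones) i 0 = (Pp *m ones) k 0.
    move=> i k.
    pose a := [pred x | (Pp *m ones) x 0 == (Pp *m ones) i 0].
    have cl : closed (edge w) a.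
      move=> x y exy; rewrite !inE (qc x y exy) //.
    have := closed_connect cl (Gc i k).
    by rewrite !inE eqxx => /esym /eqP ->.
  move=> i k j l nz1 nz2.
  by have := qall i k; rewrite !qv (qE _ _ nz1) (qE _ _ nz2).
- move=> Heq.
  have qconst : forall i k, (Pp *m ones) i 0 = (Pp *m ones) k 0.
    move=> i k; have [r nr] := F2 i; have [s ns] := F2 k.
    rewrite -supp in nr; rewrite -supp in ns.
    by rewrite !qv (qE _ _ nr) (qE _ _ ns); apply: Heq.
  have Lq0 : L *m (Pp *m ones) = 0.
    apply/matrixP => i z; rewrite (ord1 z) /L lap_mulv // [RHS]mxE big1 // => k _.
    by rewrite (qconst i k) subrr mulr0.
  have rs0 : forall r, \sum_s Lc r s = 0.
    by move=> r; rewrite rowsumLc Lq0 mulmx0 mxE.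
  have offd : forall r s, r != s -> Lc r s <= 0.
    move=> r s nrs; rewrite mxE; apply: sumr_le0 => k _.
    rewrite mxE mulr_suml; apply: sumr_le0 => i _; rewrite mxE.
    have [->|nz1] := eqVneq (Pp i r) 0; first by rewrite !mul0r.
    have [->|nz2] := eqVneq (Pp k s) 0; first by rewrite !mulr0.
    have nik : i != k.
      apply/eqP => eik; move: nz1 nz2; rewrite eik !supp => nz1 nz2.
      by have := F1 k r s nz1; rewrite eq_sym => /(_ nrs) /eqP; rewrite (negbTE nz2).
    rewrite (Heq i k r s nz1 nz2) /L /laplacian mxE (negbTE nik).
    have -> : Pp k s * - w i k * Pp k s = - (w i k * Pp k s ^+ 2) by ring.
    by rewrite oppr_le0 mulr_ge0 ?sqr_ge0.
  exists (fun r s => if r == s then 0 else - Lc r s); split.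
    split; first by move=> r s; case: eqP => [//|/eqP nrs]; rewrite oppr_ge0 offd.
    split; last by move=> r; rewrite eqxx.
    by move=> r s; rewrite eq_sym; case: (eqVneq s r) => // _; rewrite Lcsym.
  apply/matrixP => r s; rewrite /laplacian [RHS]mxE; case: (eqVneq r s) => [<-|nrs].
    rewrite (bigD1 r) //= eqxx add0r.
    rewrite (eq_bigr (fun k => - Lc r k)); last first.
      by move=> k nkr; rewrite eq_sym (negbTE nkr).
    rewrite sumrN; have := rs0 r; rewrite (bigD1 r) //= => /eqP.
    by rewrite addr_eq0 => /eqP ->.
  by rewrite opprK.
Qed.
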